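(* Let $L\geq 2$ and let $\mathcal{Z}(\lambda_1,\dots,\lambda_L)=\langle\bar 0|\mathcal{B}(\lambda_1)\cdots\mathcal{B}(\lambda_L)|0\rangle$ be the partition function of the six-vertex model with one reflecting end and domain-wall boundaries (see context). Then $\mathcal{Z}$ vanishes whenever $\lambda_1=\mu_1-\gamma$ and $\lambda_2=\mu_1$ (with $\lambda_3,\dots,\lambda_L$ arbitrary). The same holds when $\lambda_1=\mu_1-\gamma$ and $\lambda_2=-\mu_1-\gamma$.
   Context: Parameters $\gamma,h,\mu_1,\dots,\mu_L\in\mathbb{C}$. Set $a(\lambda)=\sinh(\lambda+\gamma)$, $b(\lambda)=\sinh(\lambda)$, $c(\lambda)=\sinh(\gamma)$. The $R$-matrix $\mathcal{R}(\lambda)\in\mathrm{End}(\mathbb{C}^2\otimes\mathbb{C}^2)$ is, in the basis $e_1\otimes e_1,e_1\otimes e_2,e_2\otimes e_1,e_2\otimes e_2$, the matrix with rows $(a,0,0,0)$, $(0,b,c,0)$, $(0,c,b,0)$, $(0,0,0,a)$ evaluated at $\lambda$. Let $\mathbb{V}_0\cong\mathbb{C}^2$ and $\mathbb{V}_{\mathcal{Q}}=(\mathbb{C}^2)^{\otimes L}$; $\mathcal{R}_{0j}$ acts on $\mathbb{V}_0$ and the $j$-th factor of $\mathbb{V}_{\mathcal{Q}}$. Define $\tau(\lambda)=\mathcal{R}_{0L}(\lambda-\mu_L)\cdots\mathcal{R}_{01}(\lambda-\mu_1)$, $\bar\tau(\lambda)=\mathcal{R}_{01}(\lambda+\mu_1)\cdots\mathcal{R}_{0L}(\lambda+\mu_L)$,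 $\mathcal{K}(\lambda)=\mathrm{diag}(\sinh(h+\lambda),\sinh(h-\lambda))$ on $\mathbb{V}_0$, and $\mathcal{T}(\lambda)=\tau(\lambda)\mathcal{K}(\lambda)\bar\tau(\lambda)=\begin{pmatrix}\mathcal{A}(\lambda)&\mathcal{B}(\lambda)\\ \mathcal{C}(\lambda)&\mathcal{D}(\lambda)\end{pmatrix}$ in $\mathbb{V}_0$, with entries in $\mathrm{End}(\mathbb{V}_{\mathcal{Q}})$. Let $|0\rangle=e_1^{\otimes L}$ and $\langle\bar 0|$ the transpose of $e_2^{\otimes L}$, $e_1=(1,0)^T$, $e_2=(0,1)^T$. *)

(* Defs.v *)
From Stdlib Require Import Reals.
From mathcomp Require Import all_boot all_algebra.
From mathcomp Require Import complex Rstruct.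
Set Implicit Arguments. Unset Strict Implicit. Unset Printing Implicit Defensive.
Import GRing.Theory.
Local Open Scope ring_scope.

Definition C := complex Rdefinitions.R.

Definition csinh (z : C) : C :=
  Complex (Rtrigo_def.sinh (Re z) * Rtrigo_def.cos (Im z))
          (Rtrigo_def.cosh (Re z) * Rtrigo_def.sin (Im z)).

(* Operators on a finite-dimensional space with basis indexed by a finType T,
   given by their matrix entries. *)
Definition op (T : finType) := T -> T -> C.
Definition opmul (T : finType) (A B : op T) : op T :=
  fun i k => \sum_(j : T) A i j * B j k.
Definition opid (T : finType) : op T := fun i j => (i == j)%:R.

(* Basis of C^2: index 0 = e_1, index 1 = e_2.
   Basis of V_Q = (C^2)^{\otimes L}: functions 'I_L -> 'I_2.
   Basis of V_0 \otimes V_Q: pairs. *)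
Definition stQ (L : nat) := {ffun 'I_L -> 'I_2}.
Definition stF (L : nat) := ('I_2 * stQ L)%type.

(* The R-matrix on C^2 \otimes C^2; entry at ((x,y),(x',y')) where the pair
   (x,y) denotes e_{x+1} \otimes e_{y+1}. Rows (a,0,0,0),(0,b,c,0),(0,c,b,0),(0,0,0,a). *)
Definition Rmat (g lam : C) (x y x' y' : 'I_2) : C :=
  if (x == y) then (if (x' == x) && (y' == y) then csinh (lam + g) else 0)
  else if (x' == x) && (y' == y) then csinh lam
  else if (x' == y) && (y' == x) then csinh g
  else 0.

Definition R0 (L : nat) (g : C) (j : 'I_L) (lam : C) : op (stF L) :=
  fun u v =>
    if [forall k, (k != j) ==> (u.2 k == v.2 k)]
    then Rmat g lam u.1 (u.2 j) v.1 (v.2 j) else 0.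

Definition Kop (L : nat) (h lam : C) : op (stF L) :=
  fun u v =>
    if (u == v) then (if u.1 == 0 then csinh (h + lam) else csinh (h - lam))
    else 0.

(* mu is indexed from 0: mu_1, ..., mu_L are mu 0, ..., mu (L-1). *)
(* tau(lam) = R_{0L}(lam - mu_L) ... R_{01}(lam - mu_1) *)
Definition tau (L : nat) (g : C) (mu : nat -> C) (lam : C) : op (stF L) :=
  foldr (fun j acc => opmul (R0 g j (lam - mu j)) acc) (@opid _) (rev (enum 'I_L)).

(* taubar(lam) = R_{01}(lam + mu_1) ... R_{0L}(lam + mu_L) *)
Definition taubar (L : nat) (g : C) (mu : nat -> C) (lam : C) : op (stF L) :=
  foldr (fun j acc => opmul (R0 g j (lam + mu j)) acc) (@opid _) (enum 'I_L).

Definition monodromy (L : nat) (g h : C) (mu : nat -> C) (lam : C) : op (stF L) :=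
  opmul (tau g mu lam) (opmul (@Kop L h lam) (taubar g mu lam)).

(* B(lam): the (1,2) block in V_0, an operator on V_Q *)
Definition Bop (L : nat) (g h : C) (mu : nat -> C) (lam : C) : op (stQ L) :=
  fun s s' => monodromy g h mu lam (0, s) (1, s').

(* |0> = e_1^{\otimes L},  <bar 0| = (e_2^{\otimes L})^T *)
Definition vac (L : nat) : stQ L := [ffun _ => 0].
Definition bvac (L : nat) : stQ L := [ffun _ => 1].

Definition Zpf (L : nat) (g h : C) (mu lam : nat -> C) : C :=
  (foldr (fun i acc => opmul (Bop g h mu (lam i)) acc) (@opid _) (iota 0 L))
    (bvac L) (vac L).

(* Main.v *)
Require Import Defs.
From mathcomp Require Import all_boot all_algebra.
From mathcomp Require Import complex Rstruct.
From Stdlib Require Reals.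
From Stdlib Require Import FunctionalExtensionality.
From mathcomp.algebra_tactics Require Import ring.
Import GRing.Theory.
Local Open Scope ring_scope.

Definition cexp (z : Defs.C) : Defs.C :=
  Complex (Rtrigo_def.exp (complex.Re z) * Rtrigo_def.cos (complex.Im z)) (Rtrigo_def.exp (complex.Re z) * Rtrigo_def.sin (complex.Im z)).
Lemma cexpD a b : cexp (a + b) = cexp a * cexp b.
Proof.
case: a => a1 a2; case: b => b1 b2; rewrite /cexp /=.
rewrite Exp_prop.exp_plus -!RplusE cosD sinD !RmultE.
rewrite [X in _ = X]/GRing.mul /=.
congr Complex; ring.
Qed.
Lemma cexp0 : cexp 0 = 1.
Proof. rewrite /cexp /= Rtrigo_def.exp_0 Rtrigo_def.cos_0 Rtrigo_def.sin_0. apply/eqP; rewrite eq_complex /=; apply/andP; split; apply/eqP; [exact: RIneq.Rmult_1_r | exact: RIneq.Rmult_0_r]. Qed.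
Lemma cexpN a : cexp (- a) * cexp a = 1.
Proof. by rewrite -cexpD addNr cexp0. Qed.
Lemma cexp_neq0 a : cexp a != 0.
Proof. apply/eqP=> h0; have := cexpN a; rewrite h0 mulr0 => /eqP; by rewrite eq_sym oner_eq0. Qed.
Lemma cexpV a : cexp (- a) = (cexp a)^-1.
Proof. apply: (mulIf (cexp_neq0 a)). by rewrite cexpN mulVf // cexp_neq0. Qed.
Lemma csinh2 z : 2 * csinh z = cexp z - cexp (- z).
Proof.
case: z => x y; rewrite /csinh /cexp /=.
rewrite /Rtrigo_def.sinh /Rtrigo_def.cosh Rtrigo1.cos_neg Rtrigo1.sin_neg.
rewrite /GRing.mul /GRing.add /GRing.opp /= .
rewrite ?RmultE ?RminusE ?RplusE ?RdivE ?RoppE ?RinvE.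
have h2 : Rdefinitions.IZR (BinNums.Zpos (BinNums.xO BinNums.xH)) = (GRing.add (GRing.one Rdefinitions.R) (GRing.one Rdefinitions.R)) by reflexivity.
by rewrite h2; congr Complex; field.
Qed.
Lemma csinhE z : csinh z = (cexp z - (cexp z)^-1) / 2.
Proof. by rewrite -cexpV -csinh2; field. Qed.

Definition i0 : 'I_2 := @Ordinal 2 0 isT.
Definition i1 : 'I_2 := @Ordinal 2 1 isT.
Lemma sum2 (F : 'I_2 -> Defs.C) : \sum_(x : 'I_2) F x = F i0 + F i1.
Proof. rewrite !big_ord_recl big_ord0 addr0; congr (F _ + F _); exact: val_inj. Qed.
Definition kk (h l : Defs.C) (x : 'I_2) : Defs.C := if x == 0 then csinh (h + l) else csinh (h - l).
Definition phi0 h l1 l2 (xa xb ya yb : 'I_2) : Defs.C :=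
  (xa == ya)%:R * (xb == yb)%:R * kk h l1 xa * kk h l2 xb.
Definition Am g l m (s xa ya xa' ya' : 'I_2) : Defs.C :=
  \sum_(c : 'I_2) Rmat g (l - m) xa i1 xa' c * Rmat g (l + m) ya' c ya s.
Definition Bm g l m (s t : 'I_2) (f : 'I_2 -> 'I_2 -> Defs.C) (xb yb : 'I_2) : Defs.C :=
  \sum_(xb' : 'I_2) \sum_(yb' : 'I_2) \sum_(c : 'I_2)
    Rmat g (l - m) xb s xb' c * Rmat g (l + m) yb' c yb t * f xb' yb'.
Definition Wapp g l1 l2 m (t : 'I_2) (v : 'I_2 -> 'I_2 -> 'I_2 -> 'I_2 -> Defs.C)
  (xa xb ya yb : 'I_2) : Defs.C :=
  \sum_(s : 'I_2) \sum_(xa' : 'I_2) \sum_(ya' : 'I_2)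
    Am g l1 m s xa ya xa' ya' * Bm g l2 m s t (fun xb' yb' => v xa' xb' ya' yb') xb yb.

Lemma Wtab_00000 g l1 l2 m v : Wapp g l1 l2 m i0 v i0 i0 i0 i0 =
  csinh g * csinh (l1 + m + g) * (csinh (l2 - m + g) * csinh (l2 + m + g) * v i1 i0 i0 i0) + csinh (l1 - m) * csinh (l1 + m) * (csinh g * csinh (l2 + m + g) * v i0 i1 i0 i0) + csinh g * csinh g * (csinh g * csinh (l2 + m + g) * v i1 i1 i1 i0).
Proof. rewrite /Wapp /Am /Bm !sum2 /Rmat /=; ring. Qed.

Lemma Wtab_00001 g l1 l2 m v : Wapp g l1 l2 m i0 v i0 i0 i0 i1 =
  csinh g * csinh (l1 + m + g) * (csinh (l2 - m + g) * csinh (l2 + m) * v i1 i0 i0 i1) + csinh (l1 - m) * csinh (l1 + m) * (csinh (l2 - m) * csinh g * v i0 i0 i0 i0) + csinh (l1 - m) * csinh (l1 + m) * (csinh g * csinh (l2 + m) * v i0 i1 i0 i1) + csinh g * csinh g * (csinh (l2 - m) * csinh g * v i1 i0 i1 i0) + csinh g * csinh g * (csinh g * csinh (l2 + m) * v i1 i1 i1 i1).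
Proof. rewrite /Wapp /Am /Bm !sum2 /Rmat /=; ring. Qed.

Lemma Wtab_00010 g l1 l2 m v : Wapp g l1 l2 m i0 v i0 i0 i1 i0 =
  csinh (l1 - m) * csinh g * (csinh (l2 - m + g) * csinh (l2 + m + g) * v i0 i0 i0 i0) + csinh g * csinh (l1 + m) * (csinh (l2 - m + g) * csinh (l2 + m + g) * v i1 i0 i1 i0) + csinh (l1 - m) * csinh (l1 + m + g) * (csinh g * csinh (l2 + m + g) * v i0 i1 i1 i0).
Proof. rewrite /Wapp /Am /Bm !sum2 /Rmat /=; ring. Qed.

Lemma Wtab_00011 g l1 l2 m v : Wapp g l1 l2 m i0 v i0 i0 i1 i1 =
  csinh (l1 - m) * csinh g * (csinh (l2 - m + g) * csinh (l2 + m) * v i0 i0 i0 i1) + csinh g * csinh (l1 + m) * (csinh (l2 - m + g) * csinh (l2 + m) * v i1 i0 i1 i1) + csinh (l1 - m) * csinh (l1 + m + g) * (csinh (l2 - m) * csinh g * v i0 i0 i1 i0) + csinh (l1 - m) * csinh (l1 + m + g) * (csinh g * csinh (l2 + m) * v i0 i1 i1 i1).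
Proof. rewrite /Wapp /Am /Bm !sum2 /Rmat /=; ring. Qed.

Lemma Wtab_00100 g l1 l2 m v : Wapp g l1 l2 m i0 v i0 i1 i0 i0 =
  csinh g * csinh (l1 + m + g) * (csinh (l2 - m) * csinh (l2 + m + g) * v i1 i1 i0 i0).
Proof. rewrite /Wapp /Am /Bm !sum2 /Rmat /=; ring. Qed.

Lemma Wtab_00101 g l1 l2 m v : Wapp g l1 l2 m i0 v i0 i1 i0 i1 =
  csinh g * csinh (l1 + m + g) * (csinh g * csinh g * v i1 i0 i0 i0) + csinh g * csinh (l1 + m + g) * (csinh (l2 - m) * csinh (l2 + m) * v i1 i1 i0 i1) + csinh (l1 - m) * csinh (l1 + m) * (csinh (l2 - m + g) * csinh g * v i0 i1 i0 i0) + csinh g * csinh g * (csinh (l2 - m + g) * csinh g * v i1 i1 i1 i0).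
Proof. rewrite /Wapp /Am /Bm !sum2 /Rmat /=; ring. Qed.

Lemma Wtab_00110 g l1 l2 m v : Wapp g l1 l2 m i0 v i0 i1 i1 i0 =
  csinh (l1 - m) * csinh g * (csinh (l2 - m) * csinh (l2 + m + g) * v i0 i1 i0 i0) + csinh g * csinh (l1 + m) * (csinh (l2 - m) * csinh (l2 + m + g) * v i1 i1 i1 i0).
Proof. rewrite /Wapp /Am /Bm !sum2 /Rmat /=; ring. Qed.

Lemma Wtab_00111 g l1 l2 m v : Wapp g l1 l2 m i0 v i0 i1 i1 i1 =
  csinh (l1 - m) * csinh g * (csinh g * csinh g * v i0 i0 i0 i0) + csinh (l1 - m) * csinh g * (csinh (l2 - m) * csinh (l2 + m) * v i0 i1 i0 i1) + csinh g * csinh (l1 + m) * (csinh g * csinh g * v i1 i0 i1 i0) + csinh g * csinh (l1 + m) * (csinh (l2 - m) * csinh (l2 + m) * v i1 i1 i1 i1) + csinh (l1 - m) * csinh (l1 + m + g) * (csinh (l2 - m + g) * csinh g * v i0 i1 i1 i0).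
Proof. rewrite /Wapp /Am /Bm !sum2 /Rmat /=; ring. Qed.

Lemma Wtab_01000 g l1 l2 m v : Wapp g l1 l2 m i0 v i1 i0 i0 i0 =
  csinh (l1 - m + g) * csinh (l1 + m) * (csinh g * csinh (l2 + m + g) * v i1 i1 i0 i0).
Proof. rewrite /Wapp /Am /Bm !sum2 /Rmat /=; ring. Qed.

Lemma Wtab_01001 g l1 l2 m v : Wapp g l1 l2 m i0 v i1 i0 i0 i1 =
  csinh (l1 - m + g) * csinh (l1 + m) * (csinh (l2 - m) * csinh g * v i1 i0 i0 i0) + csinh (l1 - m + g) * csinh (l1 + m) * (csinh g * csinh (l2 + m) * v i1 i1 i0 i1).
Proof. rewrite /Wapp /Am /Bm !sum2 /Rmat /=; ring. Qed.

Lemma Wtab_01010 g l1 l2 m v : Wapp g l1 l2 m i0 v i1 i0 i1 i0 =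
  csinh (l1 - m + g) * csinh g * (csinh (l2 - m + g) * csinh (l2 + m + g) * v i1 i0 i0 i0) + csinh (l1 - m + g) * csinh (l1 + m + g) * (csinh g * csinh (l2 + m + g) * v i1 i1 i1 i0).
Proof. rewrite /Wapp /Am /Bm !sum2 /Rmat /=; ring. Qed.

Lemma Wtab_01011 g l1 l2 m v : Wapp g l1 l2 m i0 v i1 i0 i1 i1 =
  csinh (l1 - m + g) * csinh g * (csinh (l2 - m + g) * csinh (l2 + m) * v i1 i0 i0 i1) + csinh (l1 - m + g) * csinh (l1 + m + g) * (csinh (l2 - m) * csinh g * v i1 i0 i1 i0) + csinh (l1 - m + g) * csinh (l1 + m + g) * (csinh g * csinh (l2 + m) * v i1 i1 i1 i1).
Proof. rewrite /Wapp /Am /Bm !sum2 /Rmat /=; ring. Qed.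

Lemma Wtab_01100 g l1 l2 m v : Wapp g l1 l2 m i0 v i1 i1 i0 i0 =
  0.
Proof. rewrite /Wapp /Am /Bm !sum2 /Rmat /=; ring. Qed.

Lemma Wtab_01101 g l1 l2 m v : Wapp g l1 l2 m i0 v i1 i1 i0 i1 =
  csinh (l1 - m + g) * csinh (l1 + m) * (csinh (l2 - m + g) * csinh g * v i1 i1 i0 i0).
Proof. rewrite /Wapp /Am /Bm !sum2 /Rmat /=; ring. Qed.

Lemma Wtab_01110 g l1 l2 m v : Wapp g l1 l2 m i0 v i1 i1 i1 i0 =
  csinh (l1 - m + g) * csinh g * (csinh (l2 - m) * csinh (l2 + m + g) * v i1 i1 i0 i0).
Proof. rewrite /Wapp /Am /Bm !sum2 /Rmat /=; ring. Qed.

Lemma Wtab_01111 g l1 l2 m v : Wapp g l1 l2 m i0 v i1 i1 i1 i1 =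
  csinh (l1 - m + g) * csinh g * (csinh g * csinh g * v i1 i0 i0 i0) + csinh (l1 - m + g) * csinh g * (csinh (l2 - m) * csinh (l2 + m) * v i1 i1 i0 i1) + csinh (l1 - m + g) * csinh (l1 + m + g) * (csinh (l2 - m + g) * csinh g * v i1 i1 i1 i0).
Proof. rewrite /Wapp /Am /Bm !sum2 /Rmat /=; ring. Qed.

Lemma Wtab_10000 g l1 l2 m v : Wapp g l1 l2 m i1 v i0 i0 i0 i0 =
  csinh g * csinh (l1 + m + g) * (csinh (l2 - m + g) * csinh g * v i1 i0 i0 i1) + csinh (l1 - m) * csinh (l1 + m) * (csinh (l2 - m) * csinh (l2 + m) * v i0 i0 i0 i0) + csinh (l1 - m) * csinh (l1 + m) * (csinh g * csinh g * v i0 i1 i0 i1) + csinh g * csinh g * (csinh (l2 - m) * csinh (l2 + m) * v i1 i0 i1 i0) + csinh g * csinh g * (csinh g * csinh g * v i1 i1 i1 i1).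
Proof. rewrite /Wapp /Am /Bm !sum2 /Rmat /=; ring. Qed.

Lemma Wtab_10001 g l1 l2 m v : Wapp g l1 l2 m i1 v i0 i0 i0 i1 =
  csinh (l1 - m) * csinh (l1 + m) * (csinh (l2 - m) * csinh (l2 + m + g) * v i0 i0 i0 i1) + csinh g * csinh g * (csinh (l2 - m) * csinh (l2 + m + g) * v i1 i0 i1 i1).
Proof. rewrite /Wapp /Am /Bm !sum2 /Rmat /=; ring. Qed.

Lemma Wtab_10010 g l1 l2 m v : Wapp g l1 l2 m i1 v i0 i0 i1 i0 =
  csinh (l1 - m) * csinh g * (csinh (l2 - m + g) * csinh g * v i0 i0 i0 i1) + csinh g * csinh (l1 + m) * (csinh (l2 - m + g) * csinh g * v i1 i0 i1 i1) + csinh (l1 - m) * csinh (l1 + m + g) * (csinh (l2 - m) * csinh (l2 + m) * v i0 i0 i1 i0) + csinh (l1 - m) * csinh (l1 + m + g) * (csinh g * csinh g * v i0 i1 i1 i1).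
Proof. rewrite /Wapp /Am /Bm !sum2 /Rmat /=; ring. Qed.

Lemma Wtab_10011 g l1 l2 m v : Wapp g l1 l2 m i1 v i0 i0 i1 i1 =
  csinh (l1 - m) * csinh (l1 + m + g) * (csinh (l2 - m) * csinh (l2 + m + g) * v i0 i0 i1 i1).
Proof. rewrite /Wapp /Am /Bm !sum2 /Rmat /=; ring. Qed.

Lemma Wtab_10100 g l1 l2 m v : Wapp g l1 l2 m i1 v i0 i1 i0 i0 =
  csinh g * csinh (l1 + m + g) * (csinh g * csinh (l2 + m) * v i1 i0 i0 i0) + csinh g * csinh (l1 + m + g) * (csinh (l2 - m) * csinh g * v i1 i1 i0 i1) + csinh (l1 - m) * csinh (l1 + m) * (csinh (l2 - m + g) * csinh (l2 + m) * v i0 i1 i0 i0) + csinh g * csinh g * (csinh (l2 - m + g) * csinh (l2 + m) * v i1 i1 i1 i0).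
Proof. rewrite /Wapp /Am /Bm !sum2 /Rmat /=; ring. Qed.

Lemma Wtab_10101 g l1 l2 m v : Wapp g l1 l2 m i1 v i0 i1 i0 i1 =
  csinh g * csinh (l1 + m + g) * (csinh g * csinh (l2 + m + g) * v i1 i0 i0 i1) + csinh (l1 - m) * csinh (l1 + m) * (csinh (l2 - m + g) * csinh (l2 + m + g) * v i0 i1 i0 i1) + csinh g * csinh g * (csinh (l2 - m + g) * csinh (l2 + m + g) * v i1 i1 i1 i1).
Proof. rewrite /Wapp /Am /Bm !sum2 /Rmat /=; ring. Qed.

Lemma Wtab_10110 g l1 l2 m v : Wapp g l1 l2 m i1 v i0 i1 i1 i0 =
  csinh (l1 - m) * csinh g * (csinh g * csinh (l2 + m) * v i0 i0 i0 i0) + csinh (l1 - m) * csinh g * (csinh (l2 - m) * csinh g * v i0 i1 i0 i1) + csinh g * csinh (l1 + m) * (csinh g * csinh (l2 + m) * v i1 i0 i1 i0) + csinh g * csinh (l1 + m) * (csinh (l2 - m) * csinh g * v i1 i1 i1 i1) + csinh (l1 - m) * csinh (l1 + m + g) * (csinh (l2 - m + g) * csinh (l2 + m) * v i0 i1 i1 i0).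
Proof. rewrite /Wapp /Am /Bm !sum2 /Rmat /=; ring. Qed.

Lemma Wtab_10111 g l1 l2 m v : Wapp g l1 l2 m i1 v i0 i1 i1 i1 =
  csinh (l1 - m) * csinh g * (csinh g * csinh (l2 + m + g) * v i0 i0 i0 i1) + csinh g * csinh (l1 + m) * (csinh g * csinh (l2 + m + g) * v i1 i0 i1 i1) + csinh (l1 - m) * csinh (l1 + m + g) * (csinh (l2 - m + g) * csinh (l2 + m + g) * v i0 i1 i1 i1).
Proof. rewrite /Wapp /Am /Bm !sum2 /Rmat /=; ring. Qed.

Lemma Wtab_11000 g l1 l2 m v : Wapp g l1 l2 m i1 v i1 i0 i0 i0 =
  csinh (l1 - m + g) * csinh (l1 + m) * (csinh (l2 - m) * csinh (l2 + m) * v i1 i0 i0 i0) + csinh (l1 - m + g) * csinh (l1 + m) * (csinh g * csinh g * v i1 i1 i0 i1).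
Proof. rewrite /Wapp /Am /Bm !sum2 /Rmat /=; ring. Qed.

Lemma Wtab_11001 g l1 l2 m v : Wapp g l1 l2 m i1 v i1 i0 i0 i1 =
  csinh (l1 - m + g) * csinh (l1 + m) * (csinh (l2 - m) * csinh (l2 + m + g) * v i1 i0 i0 i1).
Proof. rewrite /Wapp /Am /Bm !sum2 /Rmat /=; ring. Qed.

Lemma Wtab_11010 g l1 l2 m v : Wapp g l1 l2 m i1 v i1 i0 i1 i0 =
  csinh (l1 - m + g) * csinh g * (csinh (l2 - m + g) * csinh g * v i1 i0 i0 i1) + csinh (l1 - m + g) * csinh (l1 + m + g) * (csinh (l2 - m) * csinh (l2 + m) * v i1 i0 i1 i0) + csinh (l1 - m + g) * csinh (l1 + m + g) * (csinh g * csinh g * v i1 i1 i1 i1).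
Proof. rewrite /Wapp /Am /Bm !sum2 /Rmat /=; ring. Qed.

Lemma Wtab_11011 g l1 l2 m v : Wapp g l1 l2 m i1 v i1 i0 i1 i1 =
  csinh (l1 - m + g) * csinh (l1 + m + g) * (csinh (l2 - m) * csinh (l2 + m + g) * v i1 i0 i1 i1).
Proof. rewrite /Wapp /Am /Bm !sum2 /Rmat /=; ring. Qed.

Lemma Wtab_11100 g l1 l2 m v : Wapp g l1 l2 m i1 v i1 i1 i0 i0 =
  csinh (l1 - m + g) * csinh (l1 + m) * (csinh (l2 - m + g) * csinh (l2 + m) * v i1 i1 i0 i0).
Proof. rewrite /Wapp /Am /Bm !sum2 /Rmat /=; ring. Qed.

Lemma Wtab_11101 g l1 l2 m v : Wapp g l1 l2 m i1 v i1 i1 i0 i1 =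
  csinh (l1 - m + g) * csinh (l1 + m) * (csinh (l2 - m + g) * csinh (l2 + m + g) * v i1 i1 i0 i1).
Proof. rewrite /Wapp /Am /Bm !sum2 /Rmat /=; ring. Qed.

Lemma Wtab_11110 g l1 l2 m v : Wapp g l1 l2 m i1 v i1 i1 i1 i0 =
  csinh (l1 - m + g) * csinh g * (csinh g * csinh (l2 + m) * v i1 i0 i0 i0) + csinh (l1 - m + g) * csinh g * (csinh (l2 - m) * csinh g * v i1 i1 i0 i1) + csinh (l1 - m + g) * csinh (l1 + m + g) * (csinh (l2 - m + g) * csinh (l2 + m) * v i1 i1 i1 i0).
Proof. rewrite /Wapp /Am /Bm !sum2 /Rmat /=; ring. Qed.

Lemma Wtab_11111 g l1 l2 m v : Wapp g l1 l2 m i1 v i1 i1 i1 i1 =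
  csinh (l1 - m + g) * csinh g * (csinh g * csinh (l2 + m + g) * v i1 i0 i0 i1) + csinh (l1 - m + g) * csinh (l1 + m + g) * (csinh (l2 - m + g) * csinh (l2 + m + g) * v i1 i1 i1 i1).
Proof. rewrite /Wapp /Am /Bm !sum2 /Rmat /=; ring. Qed.
Definition Wtabs := (Wtab_00000, Wtab_00001, Wtab_00010, Wtab_00011, Wtab_00100, Wtab_00101, Wtab_00110, Wtab_00111, Wtab_01000, Wtab_01001, Wtab_01010, Wtab_01011, Wtab_01100, Wtab_01101, Wtab_01110, Wtab_01111, Wtab_10000, Wtab_10001, Wtab_10010, Wtab_10011, Wtab_10100, Wtab_10101, Wtab_10110, Wtab_10111, Wtab_11000, Wtab_11001, Wtab_11010, Wtab_11011, Wtab_11100, Wtab_11101, Wtab_11110, Wtab_11111).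

Set Implicit Arguments. Unset Strict Implicit.

Lemma opmulA (T : finType) (A B D : op T) : opmul A (opmul B D) = opmul (opmul A B) D.
Proof.
apply: functional_extensionality => i; apply: functional_extensionality => k.
rewrite /opmul.
under eq_bigr do rewrite big_distrr /=.
rewrite exchange_big /=; apply: eq_bigr => l _; rewrite big_distrl /=.
by apply: eq_bigr => j _; rewrite mulrA.
Qed.

Lemma opmul1 (T : finType) (A : op T) : opmul (@opid T) A = A.
Proof.
apply: functional_extensionality => i; apply: functional_extensionality => k.
rewrite /opmul /opid (bigD1 i) //= eqxx mul1r big1 ?addr0 // => j /negbTE.
by rewrite eq_sym => ->; rewrite mul0r.
Qed.

Lemma opmul1r (T : finType) (A : op T) : opmul A (@opid T) = A.
Proof.
apply: functional_extensionality => i; apply: functional_extensionality => k.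
rewrite /opmul /opid (bigD1 k) //= eqxx mulr1 big1 ?addr0 // => j /negbTE.
by move=> ->; rewrite mulr0.
Qed.

Definition tauS {L : nat} (g : Defs.C) (mu : nat -> Defs.C) (lam : Defs.C) (s : seq 'I_L) : op (stF L) :=
  foldr (fun j acc => opmul (R0 g j (lam - mu j)) acc) (@opid _) (rev s).
Definition taubarS {L : nat} (g : Defs.C) (mu : nat -> Defs.C) (lam : Defs.C) (s : seq 'I_L) : op (stF L) :=
  foldr (fun j acc => opmul (R0 g j (lam + mu j)) acc) (@opid _) s.
Definition TS {L : nat} (g h : Defs.C) (mu : nat -> Defs.C) (lam : Defs.C) (s : seq 'I_L) : op (stF L) :=
  opmul (tauS g mu lam s) (opmul (@Kop L h lam) (taubarS g mu lam s)).

Lemma monodromyE L g h mu lam : @monodromy L g h mu lam = TS g h mu lam (enum 'I_L).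
Proof. by []. Qed.

Lemma foldr_opmul_rcons (T : finType) (I : Type) (X : I -> op T) s j :
  foldr (fun i acc => opmul (X i) acc) (@opid T) (rcons s j) =
  opmul (foldr (fun i acc => opmul (X i) acc) (@opid T) s) (X j).
Proof.
elim: s => [|i s IH] /=; first by rewrite opmul1 opmul1r.
by rewrite IH opmulA.
Qed.

Lemma TS_rcons L g h mu lam (s : seq 'I_L) j :
  TS g h mu lam (rcons s j) =
  opmul (R0 g j (lam - mu j)) (opmul (TS g h mu lam s) (R0 g j (lam + mu j))).
Proof.
rewrite /TS /tauS /taubarS rev_rcons /= foldr_opmul_rcons.
by rewrite !opmulA.
Qed.

Definition upd {L : nat} (u : stQ L) (j : 'I_L) (c : 'I_2) : stQ L :=
  [ffun k => if k == j then c else u k].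
Definition tgl (c : 'I_2) : 'I_2 := if c == i0 then i1 else i0.
Definition tog {L : nat} (u : stQ L) (j : 'I_L) : stQ L :=
  [ffun k => if k == j then tgl (u k) else u k].

Lemma I2P (x : 'I_2) : x = i0 \/ x = i1.
Proof. case: x => [[|[|//]] p]; [left|right]; exact: val_inj. Qed.

Lemma i01 : (i0 == i1) = false. Proof. by []. Qed.
Lemma i10 : (i1 == i0) = false. Proof. by []. Qed.

Lemma tglK : involutive tgl.
Proof. by move=> c; case: (I2P c) => ->. Qed.

Lemma togK L (j : 'I_L) : involutive (fun u => tog u j).
Proof.
move=> u; apply/ffunP => k; rewrite !ffunE.
by case: eqP => // _; rewrite tglK.
Qed.

Lemma tog_inj L (j : 'I_L) : injective (fun u => tog u j).
Proof. apply: inv_inj; exact: togK. Qed.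

Lemma updE L (u : stQ L) j c k : upd u j c k = if k == j then c else u k.
Proof. by rewrite ffunE. Qed.

Lemma upd_id L (u : stQ L) j : upd u j (u j) = u.
Proof. by apply/ffunP => k; rewrite ffunE; case: eqP => // ->. Qed.

Lemma sum_site L (u : stQ L) (j : 'I_L) (G : 'I_2 -> stQ L -> Defs.C) :
  \sum_(w : stQ L) (if [forall k, (k != j) ==> (u k == w k)] then G (w j) w else 0) =
  \sum_(c : 'I_2) G c (upd u j c).
Proof.
rewrite [RHS](eq_bigr (fun c => \sum_(w : stQ L) (if w == upd u j c then G c w else 0))); last first.
  by move=> c _; rewrite -big_mkcond big_pred1_eq.
rewrite exchange_big /=; apply: eq_bigr => w _.
case: ifP => Hf.
- have ew : w = upd u j (w j).
    apply/ffunP => k; rewrite ffunE; case: eqP => [->//|/eqP nk].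
    by have := forallP Hf k; rewrite nk /= => /eqP.
  rewrite (bigD1 (w j)) //= -ew eqxx big1 ?addr0 // => c nc.
  case: eqP => // ew2; move: nc; have := congr1 (fun f : stQ L => f j) ew2.
  by rewrite /= ffunE eqxx => ->; rewrite eqxx.
- rewrite big1 // => c _; case: eqP => // ew.
  move: Hf; rewrite ew => /negbT/negP; case; apply/forallP => k.
  by apply/implyP => nk; rewrite ffunE (negbTE nk).
Qed.

Lemma sum_pair (A B : finType) (F : A * B -> Defs.C) :
  \sum_(w : A * B) F w = \sum_(a : A) \sum_(b : B) F (a, b).
Proof. by rewrite pair_bigA; apply: eq_bigr => [[a b]]. Qed.

Lemma R0_left L g (j : 'I_L) lam x u (F : stF L -> Defs.C) :
  \sum_(w : stF L) R0 g j lam (x, u) w * F w =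
  \sum_(x' : 'I_2) \sum_(c : 'I_2) Rmat g lam x (u j) x' c * F (x', upd u j c).
Proof.
rewrite sum_pair; apply: eq_bigr => x' _.
rewrite -(sum_site u j (fun c w => Rmat g lam x (u j) x' c * F (x', w))).
apply: eq_bigr => w _; rewrite /R0 /=.
by case: ifP => _; rewrite ?mul0r.
Qed.

Lemma R0_right L g (j : 'I_L) lam y v (F : stF L -> Defs.C) :
  \sum_(w : stF L) F w * R0 g j lam w (y, v) =
  \sum_(y' : 'I_2) \sum_(c : 'I_2) F (y', upd v j c) * Rmat g lam y' c y (v j).
Proof.
rewrite sum_pair; apply: eq_bigr => y' _.
rewrite -(sum_site v j (fun c w => F (y', w) * Rmat g lam y' c y (v j))).
apply: eq_bigr => w _; rewrite /R0 /=.
have -> : [forall k, (k != j) ==> (w k == v k)] = [forall k, (k != j) ==> (v k == w k)].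
  by apply: eq_forallb => k; rewrite [w k == _]eq_sym.
by case: ifP => _; rewrite ?mulr0.
Qed.

Definition jfree {L : nat} (j : 'I_L) (X : op (stF L)) :=
  (forall x y (u v : stQ L), u j != v j -> X (x, u) (y, v) = 0) /\
  (forall x y (u v : stQ L), X (x, tog u j) (y, tog v j) = X (x, u) (y, v)).

Lemma tog_j L (u : stQ L) j : tog u j j = tgl (u j).
Proof. by rewrite ffunE eqxx. Qed.

Lemma jfree_mul L (j : 'I_L) X Y : jfree j X -> jfree j Y -> jfree j (opmul X Y).
Proof.
move=> [X1 X2] [Y1 Y2]; split.
- move=> x y u v nuv; rewrite /opmul big1 // => [[z w]] _.
  case: (eqVneq (u j) (w j)) => e.
    by rewrite Y1 ?mulr0 // -e.
  by rewrite X1 ?mul0r.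
- move=> x y u v; rewrite /opmul.
  rewrite (reindex_inj (h := fun w : stF L => (w.1, tog w.2 j))); last first.
    by move=> [a b] [c d] /= [-> /tog_inj ->].
  by apply: eq_bigr => [[z w]] _ /=; rewrite X2 Y2.
Qed.

Lemma tog_eq L (u v : stQ L) j : (tog u j == tog v j) = (u == v).
Proof. exact: (inj_eq (@tog_inj L j)). Qed.

Lemma jfree_id L (j : 'I_L) : jfree j (@opid (stF L)).
Proof.
split.
- move=> x y u v nuv; rewrite /opid; case: eqP => // [[_ e]].
  by move: nuv; rewrite e eqxx.
- by move=> x y u v; rewrite /opid !xpair_eqE tog_eq.
Qed.

Lemma jfree_K L (j : 'I_L) h lam : jfree j (@Kop L h lam).
Proof.
split.
- move=> x y u v nuv; rewrite /Kop; case: eqP => // [[_ e]].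
  by move: nuv; rewrite e eqxx.
- by move=> x y u v; rewrite /Kop !xpair_eqE tog_eq.
Qed.

Lemma jfree_R0 L (j i : 'I_L) g lam : i != j -> jfree j (R0 g i lam).
Proof.
move=> nij; split.
- move=> x y u v nuv; rewrite /R0 /=; case: ifP => // /forallP /(_ j).
  by rewrite eq_sym nij /= (negbTE nuv).
- move=> x y u v; rewrite /R0 /= !ffunE (negbTE nij).
  congr (if _ then _ else _); apply: eq_forallb => k; rewrite !ffunE.
  case: (k == i) => //=; case: (k == j) => //.
  by case: (I2P (u k)) => ->; case: (I2P (v k)) => ->.
Qed.

Lemma jfree_foldr L (j : 'I_L) g (f : 'I_L -> Defs.C) (s : seq 'I_L) :
  j \notin s -> jfree j (foldr (fun i acc => opmul (R0 g i (f i)) acc) (@opid _) s).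
Proof.
elim: s => [|i s IH] /=; first by move=> _; exact: jfree_id.
rewrite inE negb_or => /andP [nji njs]; apply: jfree_mul; last exact: IH.
by apply: jfree_R0; rewrite eq_sym.
Qed.

Lemma jfree_TS L (j : 'I_L) g h mu lam (s : seq 'I_L) :
  j \notin s -> jfree j (TS g h mu lam s).
Proof.
move=> njs; rewrite /TS /tauS /taubarS.
apply: jfree_mul; first by apply: jfree_foldr; rewrite mem_rev.
apply: jfree_mul; first exact: jfree_K.
exact: jfree_foldr.
Qed.

Lemma jfree_loc L (j : 'I_L) X x y (u v : stQ L) c c' : jfree j X ->
  X (x, upd u j c) (y, upd v j c') = (c == c')%:R * X (x, upd u j i1) (y, upd v j i1).
Proof.
move=> [X1 X2]; case: eqP => [<-|/eqP ncc]; last first.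
  by rewrite X1 ?mul0r // !ffunE !eqxx.
rewrite mul1r; case: (I2P c) => -> //.
rewrite -X2; congr (X (_, _) (_, _)); apply/ffunP => k; rewrite !ffunE;
  by case: eqP.
Qed.

Lemma TS_step L g h (mu : nat -> Defs.C) lam (s : seq 'I_L) j x u y v : j \notin s ->
  TS g h mu lam (rcons s j) (x, u) (y, v) =
  \sum_(x' : 'I_2) \sum_(c : 'I_2) Rmat g (lam - mu j) x (u j) x' c *
    \sum_(y' : 'I_2) TS g h mu lam s (x', upd u j i1) (y', upd v j i1) *
       Rmat g (lam + mu j) y' c y (v j).
Proof.
move=> njs; have J := jfree_TS g h mu lam njs.
rewrite TS_rcons {1}/opmul R0_left.
apply: eq_bigr => x' _; apply: eq_bigr => c _; congr (_ * _).
rewrite /opmul R0_right; apply: eq_bigr => y' _.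
rewrite (bigD1 c) //= big1 ?addr0.
  by rewrite (jfree_loc _ _ _ _ _ _ J) eqxx mul1r.
move=> c' nc; rewrite (jfree_loc _ _ _ _ _ _ J).
by rewrite eq_sym (negbTE nc) mul0r mul0r.
Qed.

Definition Phi {L : nat} g h (mu : nat -> Defs.C) l1 l2 (s : seq 'I_L) (xa xb ya yb : 'I_2) (q : stQ L) : Defs.C :=
  \sum_(p : stQ L) TS g h mu l1 s (xa, bvac L) (ya, p) * TS g h mu l2 s (xb, p) (yb, q).

Lemma upd_tog L (p : stQ L) j c : upd (tog p j) j c = upd p j c.
Proof. by apply/ffunP => k; rewrite !ffunE; case: eqP. Qed.

Lemma sum_split L (j : 'I_L) (F : 'I_2 -> stQ L -> Defs.C) :
  (forall t (p : stQ L), p j != i1 -> F t p = 0) ->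
  \sum_(p : stQ L) F (p j) (upd p j i1) = \sum_(p : stQ L) \sum_(t : 'I_2) F t p.
Proof.
move=> HF.
rewrite (bigID (fun p : stQ L => p j == i1)) /=.
rewrite [X in _ + X](reindex_inj (@tog_inj L j)) /=.
rewrite [RHS](bigID (fun p : stQ L => p j == i1)) /=.
rewrite [X in _ = _ + X]big1 ?addr0; last first.
  by move=> p np; rewrite big1 // => t _; rewrite HF.
have E : forall p : stQ L, (tog p j j != i1) = (p j == i1).
  by move=> p; rewrite tog_j; case: (I2P (p j)) => ->.
rewrite [X in _ + X](eq_bigl (fun p : stQ L => p j == i1)); last by move=> p; rewrite E.
rewrite -big_split /=.
apply: eq_bigr => p /eqP pj.
rewrite sum2 addrC tog_j pj upd_tog /=.
by have -> : upd p j i1 = p by rewrite -pj upd_id.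
Qed.

Lemma Bm_sum (I : finType) g l m s t (V : I -> 'I_2 -> 'I_2 -> Defs.C) xb yb :
  Bm g l m s t (fun b d => \sum_(p : I) V p b d) xb yb = \sum_(p : I) Bm g l m s t (V p) xb yb.
Proof.
rewrite /Bm.
under eq_bigr => ? _ do under eq_bigr => ? _ do under eq_bigr => ? _ do rewrite mulr_sumr.
under eq_bigr => ? _ do under eq_bigr => ? _ do rewrite exchange_big.
under eq_bigr => ? _ do rewrite exchange_big.
by rewrite exchange_big.
Qed.

Lemma Wapp_sum (I : finType) g l1 l2 m t (V : I -> 'I_2 -> 'I_2 -> 'I_2 -> 'I_2 -> Defs.C) xa xb ya yb :
  Wapp g l1 l2 m t (fun a b c d => \sum_(p : I) V p a b c d) xa xb ya yb =
  \sum_(p : I) Wapp g l1 l2 m t (V p) xa xb ya yb.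
Proof.
rewrite /Wapp.
under eq_bigr => ? _ do under eq_bigr => ? _ do under eq_bigr => ? _ do rewrite Bm_sum mulr_sumr.
under eq_bigr => ? _ do under eq_bigr => ? _ do rewrite exchange_big.
under eq_bigr => ? _ do rewrite exchange_big.
by rewrite exchange_big.
Qed.

Lemma bvac_j L (j : 'I_L) : bvac L j = i1.
Proof. by rewrite ffunE; apply: val_inj. Qed.

Lemma upd_bvac L (j : 'I_L) : upd (bvac L) j i1 = bvac L.
Proof. by rewrite -(bvac_j j) upd_id. Qed.

Lemma Phi_step L g h mu l1 l2 (s : seq 'I_L) j xa xb ya yb q : j \notin s ->
  Phi g h mu l1 l2 (rcons s j) xa xb ya yb q =
  Wapp g l1 l2 (mu j) (q j) (fun a b c d => Phi g h mu l1 l2 s a b c d (upd q j i1)) xa xb ya yb.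
Proof.
move=> njs; rewrite /Phi Wapp_sum.
under eq_bigr => p _ do rewrite !TS_step //.
rewrite bvac_j upd_bvac.
rewrite (@sum_split L j (fun t p' =>
  (\sum_(x' < 2) \sum_(c < 2) Rmat g (l1 - mu j) xa i1 x' c *
      \sum_(y' < 2) TS g h mu l1 s (x', bvac L) (y', p') * Rmat g (l1 + mu j) y' c ya t) *
  (\sum_(x' < 2) \sum_(c < 2) Rmat g (l2 - mu j) xb t x' c *
      \sum_(y' < 2) TS g h mu l2 s (x', p') (y', upd q j i1) * Rmat g (l2 + mu j) y' c yb (q j)))).
  apply: eq_bigr => p _.
  rewrite /Wapp /Am /Bm !sum2; ring.
move=> t p' np; have [J1 _] := jfree_TS g h mu l1 njs.
rewrite [X in X * _]big1 ?mul0r // => x' _; rewrite big1 // => c _.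
rewrite big1 ?mulr0 // => y' _; rewrite J1 ?mul0r //.
by rewrite bvac_j eq_sym.
Qed.

Lemma WappL g l1 l2 m t k1 k2 (v w : 'I_2 -> 'I_2 -> 'I_2 -> 'I_2 -> Defs.C) xa xb ya yb :
  Wapp g l1 l2 m t (fun a b c d => k1 * v a b c d + k2 * w a b c d) xa xb ya yb =
  k1 * Wapp g l1 l2 m t v xa xb ya yb + k2 * Wapp g l1 l2 m t w xa xb ya yb.
Proof. rewrite /Wapp /Am /Bm !sum2; ring. Qed.

Lemma WappZ g l1 l2 m t k1 (v : 'I_2 -> 'I_2 -> 'I_2 -> 'I_2 -> Defs.C) xa xb ya yb :
  Wapp g l1 l2 m t (fun a b c d => k1 * v a b c d) xa xb ya yb =
  k1 * Wapp g l1 l2 m t v xa xb ya yb.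
Proof. rewrite /Wapp /Am /Bm !sum2; ring. Qed.

Lemma TS_nil L g h mu lam : TS g h mu lam ([::] : seq 'I_L) = Kop h lam.
Proof. by rewrite /TS /tauS /taubarS /= opmul1 opmul1r. Qed.

Lemma Phi_nil L g h mu l1 l2 xa xb ya yb (q : stQ L) :
  Phi g h mu l1 l2 [::] xa xb ya yb q = (q == bvac L)%:R * phi0 h l1 l2 xa xb ya yb.
Proof.
rewrite /Phi !TS_nil (bigD1 (bvac L)) //= big1 ?addr0; last first.
  move=> p np; rewrite {1}/Kop xpair_eqE.
  by rewrite [bvac L == p]eq_sym (negbTE np) andbF mul0r.
rewrite /Kop /phi0 /kk !xpair_eqE eqxx andbT.
case: (xa == ya); case: (xb == yb); rewrite /= ?mul0r ?mulr0 ?mul1r ?mulr1 //.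
  by rewrite [q == _]eq_sym; case: (bvac L == q); rewrite ?mul1r ?mul0r ?mulr0.
by rewrite !mul0r mulr0.
Qed.

Lemma Wapp_ext g l1 l2 m t (v w : 'I_2 -> 'I_2 -> 'I_2 -> 'I_2 -> Defs.C) xa xb ya yb :
  (forall a b c d, v a b c d = w a b c d) ->
  Wapp g l1 l2 m t v xa xb ya yb = Wapp g l1 l2 m t w xa xb ya yb.
Proof.
move=> E; have -> // : v = w.
by do 4 (apply: functional_extensionality => ?); apply: E.
Qed.

Arguments Wapp_ext : clear implicits.

Definition vv g h m0 l2 t := Wapp g (m0 - g) l2 m0 t (phi0 h (m0 - g) l2).

Definition good g h m0 l2 (al be de : Defs.C -> Defs.C) :=
  forall m xa xb ya yb,
     Wapp g (m0 - g) l2 m i1 (vv g h m0 l2 i1) xa xb ya yb = al m * vv g h m0 l2 i1 xa xb ya yb /\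
     Wapp g (m0 - g) l2 m i1 (vv g h m0 l2 i0) xa xb ya yb = de m * vv g h m0 l2 i0 xa xb ya yb /\
     Wapp g (m0 - g) l2 m i0 (vv g h m0 l2 i1) xa xb ya yb = be m * vv g h m0 l2 i0 xa xb ya yb /\
     Wapp g (m0 - g) l2 m i0 (vv g h m0 l2 i0) xa xb ya yb = 0.

Lemma Phi_invariant L g h (mu : nat -> Defs.C) l2 (j0 : 'I_L) al be de :
  nat_of_ord j0 = 0%N -> good g h (mu 0%N) l2 al be de ->
  forall r, uniq (j0 :: r) -> exists c0 c1 : stQ L -> Defs.C, forall xa xb ya yb q,
    Phi g h mu (mu 0%N - g) l2 (j0 :: r) xa xb ya yb q =
      c0 q * vv g h (mu 0%N) l2 i1 xa xb ya yb + c1 q * vv g h (mu 0%N) l2 i0 xa xb ya yb.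
Proof.
move=> hj0 Hg; elim/last_ind => [_|r j IH].
  exists (fun q : stQ L => (q j0 == i1)%:R * (upd q j0 i1 == bvac L)%:R).
  exists (fun q : stQ L => (q j0 == i0)%:R * (upd q j0 i1 == bvac L)%:R).
  move=> xa xb ya yb q.
  rewrite (_ : [:: j0] = rcons [::] j0) // Phi_step //.
  rewrite (Wapp_ext _ _ _ _ _ _ (fun a b c d => (upd q j0 i1 == bvac L)%:R * phi0 h (mu 0%N - g) l2 a b c d)); last first.
    by move=> a b c d; rewrite Phi_nil.
  rewrite WappZ hj0 /vv.
  by case: (I2P (q j0)) => ->; rewrite ?eqxx ?i01 ?i10 /= ?mul0r ?mul1r ?add0r ?addr0.
rewrite -rcons_cons rcons_uniq => /andP [nj U].
have [c0 [c1 H]] := IH U.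
exists (fun q : stQ L => if q j == i1 then al (mu j) * c0 (upd q j i1) else 0).
exists (fun q : stQ L => if q j == i1 then de (mu j) * c1 (upd q j i1) else be (mu j) * c0 (upd q j i1)).
move=> xa xb ya yb q; rewrite Phi_step //.
rewrite (Wapp_ext _ _ _ _ _ _ (fun a b c d => c0 (upd q j i1) * vv g h (mu 0%N) l2 i1 a b c d +
   c1 (upd q j i1) * vv g h (mu 0%N) l2 i0 a b c d)); last by move=> a b c d; rewrite H.
rewrite WappL; have [H1 [H2 [H3 H4]]] := Hg (mu j) xa xb ya yb.
by case: (I2P (q j)) => ->; rewrite ?H1 ?H2 ?H3 ?H4 /=; ring.
Qed.

Ltac cexp_field :=
  rewrite ?csinhE; do 3 rewrite ?cexpD ?cexpV;
  field; by rewrite ?cexp_neq0.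
Ltac allcases xa xb ya yb :=
  have [->|->] := I2P xa; have [->|->] := I2P xb; have [->|->] := I2P ya; have [->|->] := I2P yb;
  rewrite !Wtabs /vv ?Wtabs /phi0 /kk /=; cexp_field.
Definition alA g (m0 m : Defs.C) := csinh (m0 - g - m) * csinh (m0 - g + m) * csinh (m0 - m + g) * csinh (m0 + m + g).
Definition beA g (m0 m : Defs.C) := csinh (m0 - g - m) * csinh (m0 - g + m) * csinh (m0 + m + g) * csinh g.
Definition deA g (m0 m : Defs.C) := csinh (m0 - g - m + g) * csinh (m0 - g - m) * csinh (m0 - g + m) * csinh (m0 + m + g).
Lemma idA11 g h m0 m xa xb ya yb :
  Wapp g (m0 - g) m0 m i1 (vv g h m0 m0 i1) xa xb ya yb = alA g m0 m * vv g h m0 m0 i1 xa xb ya yb.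
Proof. (rewrite /alA /beA /deA; allcases xa xb ya yb). Qed.
Lemma idA10 g h m0 m xa xb ya yb :
  Wapp g (m0 - g) m0 m i1 (vv g h m0 m0 i0) xa xb ya yb = deA g m0 m * vv g h m0 m0 i0 xa xb ya yb.
Proof. (rewrite /alA /beA /deA; allcases xa xb ya yb). Qed.
Lemma idA01 g h m0 m xa xb ya yb :
  Wapp g (m0 - g) m0 m i0 (vv g h m0 m0 i1) xa xb ya yb = beA g m0 m * vv g h m0 m0 i0 xa xb ya yb.
Proof. (rewrite /alA /beA /deA; allcases xa xb ya yb). Qed.
Lemma idA00 g h m0 m xa xb ya yb :
  Wapp g (m0 - g) m0 m i0 (vv g h m0 m0 i0) xa xb ya yb = 0.
Proof. (rewrite /alA /beA /deA; allcases xa xb ya yb). Qed.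
Lemma goodA g h m0 : good g h m0 m0 (alA g m0) (beA g m0) (deA g m0).
Proof. move=> m xa xb ya yb; split; [|split; [|split]]; [exact: idA11|exact: idA10|exact: idA01|exact: idA00]. Qed.
Definition alB g (m0 m : Defs.C) := csinh (m0 - g - m) * csinh (m0 - g + m) * csinh (- m0 - g - m) * csinh (- m0 - g + m).
Definition beB g (m0 m : Defs.C) := - (csinh (m0 - g - m) * csinh (m0 - g + m) * csinh (- m0 - g - m) * csinh g).
Definition deB g (m0 m : Defs.C) := csinh (m0 - g - m) * csinh (m0 - g + m) * csinh (- m0 - g - m) * csinh (- m0 - g + m + g).
Lemma idB11 g h m0 m xa xb ya yb :
  Wapp g (m0 - g) (- m0 - g) m i1 (vv g h m0 (- m0 - g) i1) xa xb ya yb = alB g m0 m * vv g h m0 (- m0 - g) i1 xa xb ya yb.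
Proof. (rewrite /alB /beB /deB; allcases xa xb ya yb). Qed.
Lemma idB10 g h m0 m xa xb ya yb :
  Wapp g (m0 - g) (- m0 - g) m i1 (vv g h m0 (- m0 - g) i0) xa xb ya yb = deB g m0 m * vv g h m0 (- m0 - g) i0 xa xb ya yb.
Proof. (rewrite /alB /beB /deB; allcases xa xb ya yb). Qed.
Lemma idB01 g h m0 m xa xb ya yb :
  Wapp g (m0 - g) (- m0 - g) m i0 (vv g h m0 (- m0 - g) i1) xa xb ya yb = beB g m0 m * vv g h m0 (- m0 - g) i0 xa xb ya yb.
Proof. (rewrite /alB /beB /deB; allcases xa xb ya yb). Qed.
Lemma idB00 g h m0 m xa xb ya yb :
  Wapp g (m0 - g) (- m0 - g) m i0 (vv g h m0 (- m0 - g) i0) xa xb ya yb = 0.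
Proof. (rewrite /alB /beB /deB; allcases xa xb ya yb). Qed.
Lemma goodB g h m0 : good g h m0 (- m0 - g) (alB g m0) (beB g m0) (deB g m0).
Proof. move=> m xa xb ya yb; split; [|split; [|split]]; [exact: idB11|exact: idB10|exact: idB01|exact: idB00]. Qed.

Lemma final_assembly L g h (mu lam : nat -> Defs.C) al be de :
  (2 <= L)%N -> lam 0%N = mu 0%N - g ->
  good g h (mu 0%N) (lam 1%N) al be de ->
  (forall t, vv g h (mu 0%N) (lam 1%N) t i0 i0 i1 i1 = 0) ->
  Zpf L g h mu lam = 0.
Proof.
case: L => [|[|n]] // _ H0 Hg Hv.
rewrite /Zpf /= {1}/opmul.
under eq_bigr => p _ do rewrite /opmul big_distrr /=.
rewrite exchange_big /=; apply: big1 => q _.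
under eq_bigr => p _ do rewrite mulrA.
rewrite -big_distrl /=.
apply/eqP; rewrite mulf_eq0; apply/orP; left; apply/eqP.
have e0 : (0 : 'I_2) = i0 by apply: val_inj.
have e1 : (1 : 'I_2) = i1 by apply: val_inj.
rewrite /Bop !monodromyE e0 e1.
rewrite -/(Phi g h mu (lam 0%N) (lam 1%N) (enum 'I_n.+2) i0 i0 i1 i1 q).
rewrite H0 enum_ordSl.
have U : uniq (ord0 :: [seq lift ord0 i | i <- enum 'I_n.+1]) by rewrite -enum_ordSl enum_uniq.
have [c0 [c1 ->]] := @Phi_invariant _ g h mu (lam 1%N) ord0 al be de (erefl 0%N) Hg _ U.
by rewrite !Hv !mulr0 addr0.
Qed.

Lemma vv_0011 g h m0 l2 t : vv g h m0 l2 t i0 i0 i1 i1 = 0.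
Proof. by case: (I2P t) => ->; rewrite /vv ?Wtabs /phi0 /=; ring. Qed.

Unset Implicit Arguments.
Unset Strict Implicit.

(* lam 0, lam 1 stand for lambda_1, lambda_2; mu 0 stands for mu_1. *)
Theorem lemma3 (L : nat) (g h : C) (mu lam : nat -> C) :
  (2 <= L)%N ->
  lam 0%N = mu 0%N - g ->
  (lam 1%N = mu 0%N \/ lam 1%N = - mu 0%N - g) ->
  Zpf L g h mu lam = 0.
Proof.
move=> hL h0 [h1|h1].
- apply: (@final_assembly L g h mu lam (alA g (mu 0%N)) (beA g (mu 0%N)) (deA g (mu 0%N)) hL h0).
    rewrite h1; exact: goodA.
  by move=> t; exact: vv_0011.
- apply: (@final_assembly L g h mu lam (alB g (mu 0%N)) (beB g (mu 0%N)) (deB g (mu 0%N)) hL h0).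
    rewrite h1; exact: goodB.
  by move=> t; exact: vv_0011.
Qed.
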